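(* Let $X\in\mathcal C$. Then: (1) $\bot\in X$ (the single-leaf bunch); (2) for all bunches $\Delta,\Delta'$, if $\Delta\in X$ then $(\Delta\mathbin{;}\Delta')\in X$; (3) for every bunch $\Delta$, if $(\Delta\mathbin{;}\Delta)\in X$ then $\Delta\in X$; (4) for every bunch $\Delta$, $\Delta\in X$ if and only if $\lfloor\Delta\rfloor\in X$.
   Context: Formulas of BI: $\varphi,\psi ::= \top \mid \bot \mid \varphi\wedge\psi \mid \varphi\vee\psi \mid \varphi\to\psi \mid \mathsf{emp} \mid \varphi\ast\psi \mid \varphi -\!\!\ast\, \psi \mid a$, $a\in\mathrm{Atom}$. Bunches are finite binary trees whose leaves are formulas or empty bunches $\varnothing_m,\varnothing_a$ and whose internal nodes are labelled by the multiplicative comma ($\Delta_1\mathbin{,}\Delta_2$) or the additive semicolon ($\Delta_1\mathbin{;}\Delta_2$). A bunched context $\Delta(-)$ is a bunch with one leaf replaced by a hole; $\Delta(\Gamma)$ fills it with $\Gamma$. Bunch equivalence $\equiv$ is the least equivalence relation making $\mathbin{,}$ commutative, associative with unit $\varnothing_m$, $\mathbin{;}$ commutative, associative with unit $\varnothing_a$, and closed under contexts; $\mathrm{Bunch}$ is the set of bunches modulo $\equiv$. $\lfloor\Delta\rfloor$ is the formula obtained from $\Delta$ by replacing $\mathbin{,}$ by $\ast$, $\varnothing_m$ by $\mathsf{emp}$, $\mathbin{;}$ by $\wedge$, $\varnothing_a$ by $\top$. The cut-free BI sequent calculus ($\Delta\vdash_{\mathsf{cf}}\varphi$) has the rules: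 (ax) $a\vdash a$ for atoms $a$; (equiv) from $\Delta'\vdash\varphi$, $\Delta\equiv\Delta'$ infer $\Delta\vdash\varphi$; (W;) from $\Delta(\Delta_1)\vdash\varphi$ infer $\Delta(\Delta_1\mathbin{;}\Delta_2)\vdash\varphi$; (C;) from $\Delta(\Delta_1\mathbin{;}\Delta_1)\vdash\varphi$ infer $\Delta(\Delta_1)\vdash\varphi$; (empR) $\varnothing_m\vdash\mathsf{emp}$; (empL) from $\Delta(\varnothing_m)\vdash\varphi$ infer $\Delta(\mathsf{emp})\vdash\varphi$; ($\ast$R) from $\Delta_1\vdash\varphi$, $\Delta_2\vdash\psi$ infer $\Delta_1\mathbin{,}\Delta_2\vdash\varphi\ast\psi$; ($\ast$L) from $\Delta(\varphi\mathbin{,}\psi)\vdash\chi$ infer $\Delta(\varphi\ast\psi)\vdash\chi$; ($-\!\ast$R) from $\Delta\mathbin{,}\varphi\vdash\psi$ infer $\Delta\vdash\varphi-\!\!\ast\,\psi$; ($-\!\ast$L) from $\Delta_1\vdash\varphi$, $\Delta(\Delta_2\mathbin{,}\psi)\vdash\chi$ infer $\Delta((\Delta_1\mathbin{,}\Delta_2)\mathbin{,}(\varphi-\!\!\ast\,\psi))\vdash\chi$; ($\top$R) $\varnothing_a\vdash\top$; ($\top$L) from $\Delta(\varnothing_a)\vdash\varphi$ infer $\Delta(\top)\vdash\varphi$; ($\wedge$R) from $\Delta_1\vdash\varphi$, $\Delta_2\vdash\psi$ infer $\Delta_1\mathbin{;}\Delta_2\vdash\varphi\wedge\psi$; ($\wedge$L)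 from $\Delta(\varphi\mathbin{;}\psi)\vdash\chi$ infer $\Delta(\varphi\wedge\psi)\vdash\chi$; ($\to$R) from $\Delta\mathbin{;}\varphi\vdash\psi$ infer $\Delta\vdash\varphi\to\psi$; ($\to$L) from $\Delta_1\vdash\varphi$, $\Delta(\Delta_2\mathbin{;}\psi)\vdash\chi$ infer $\Delta((\Delta_1\mathbin{;}\Delta_2)\mathbin{;}(\varphi\to\psi))\vdash\chi$; ($\bot$L) $\Delta(\bot)\vdash\varphi$; ($\vee$R1/2) from $\Delta\vdash\varphi$ (resp. $\Delta\vdash\psi$) infer $\Delta\vdash\varphi\vee\psi$; ($\vee$L) from $\Delta(\varphi)\vdash\chi$, $\Delta(\psi)\vdash\chi$ infer $\Delta(\varphi\vee\psi)\vdash\chi$. (No cut rule.) For a formula $\varphi$, the principal closed set is $[\![\varphi]\!]^{\mathrm{out}}=\{\Delta\in\mathrm{Bunch}\mid\Delta\vdash_{\mathsf{cf}}\varphi\}$. For $X\subseteq\mathrm{Bunch}$, $\mathrm{cl}(X)=\bigcap\{[\![\varphi]\!]^{\mathrm{out}}\mid X\subseteq[\![\varphi]\!]^{\mathrm{out}}\}$, and $\mathcal C=\{X\subseteq\mathrm{Bunch}\mid X=\mathrm{cl}(X)\}$. A formula regarded as an element of $\mathrm{Bunch}$ is the single-leaf bunch. *)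

(* Defs.v *)
From Stdlib Require Import Arith.

Definition atom := nat.

Inductive formula : Type :=
| FTop | FBot
| FAnd (p q : formula) | FOr (p q : formula) | FImp (p q : formula)
| FEmp | FStar (p q : formula) | FWand (p q : formula)
| FAtom (a : atom).

Inductive bunch : Type :=
| BForm (p : formula)
| BEmpM
| BEmpA
| BComma (d1 d2 : bunch)
| BSemi (d1 d2 : bunch).

Inductive bctx : Type :=
| Hole
| CCommaL (c : bctx) (d : bunch)
| CCommaR (d : bunch) (c : bctx)
| CSemiL (c : bctx) (d : bunch)
| CSemiR (d : bunch) (c : bctx).

Fixpoint fill (c : bctx) (g : bunch) : bunch :=
  match c with
  | Hole => g
  | CCommaL c d => BComma (fill c g) d
  | CCommaR d c => BComma d (fill c g)
  | CSemiL c d => BSemi (fill c g) d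
  | CSemiR d c => BSemi d (fill c g)
  end.

Inductive beq : bunch -> bunch -> Prop :=
| beq_refl d : beq d d
| beq_sym d e : beq d e -> beq e d
| beq_trans d e f : beq d e -> beq e f -> beq d f
| beq_comma_comm d e : beq (BComma d e) (BComma e d)
| beq_comma_assoc d e f : beq (BComma d (BComma e f)) (BComma (BComma d e) f)
| beq_comma_unit d : beq (BComma d BEmpM) d
| beq_semi_comm d e : beq (BSemi d e) (BSemi e d)
| beq_semi_assoc d e f : beq (BSemi d (BSemi e f)) (BSemi (BSemi d e) f)
| beq_semi_unit d : beq (BSemi d BEmpA) d
| beq_ctx c d e : beq d e -> beq (fill c d) (fill c e).

Fixpoint floor (d : bunch) : formula :=
  match d with
  | BForm p => p
  | BEmpM => FEmp
  | BEmpA => FTop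
  | BComma d1 d2 => FStar (floor d1) (floor d2)
  | BSemi d1 d2 => FAnd (floor d1) (floor d2)
  end.

Inductive cf : bunch -> formula -> Prop :=
| cf_ax a : cf (BForm (FAtom a)) (FAtom a)
| cf_equiv d d' p : cf d' p -> beq d d' -> cf d p
| cf_weak c d1 d2 p : cf (fill c d1) p -> cf (fill c (BSemi d1 d2)) p
| cf_contr c d1 p : cf (fill c (BSemi d1 d1)) p -> cf (fill c d1) p
| cf_empR : cf BEmpM FEmp
| cf_empL c p : cf (fill c BEmpM) p -> cf (fill c (BForm FEmp)) p
| cf_starR d1 d2 p q : cf d1 p -> cf d2 q -> cf (BComma d1 d2) (FStar p q)
| cf_starL c p q r : cf (fill c (BComma (BForm p) (BForm q))) r ->
    cf (fill c (BForm (FStar p q))) r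
| cf_wandR d p q : cf (BComma d (BForm p)) q -> cf d (FWand p q)
| cf_wandL c d1 d2 p q r : cf d1 p -> cf (fill c (BComma d2 (BForm q))) r ->
    cf (fill c (BComma (BComma d1 d2) (BForm (FWand p q)))) r
| cf_topR : cf BEmpA FTop
| cf_topL c p : cf (fill c BEmpA) p -> cf (fill c (BForm FTop)) p
| cf_andR d1 d2 p q : cf d1 p -> cf d2 q -> cf (BSemi d1 d2) (FAnd p q)
| cf_andL c p q r : cf (fill c (BSemi (BForm p) (BForm q))) r ->
    cf (fill c (BForm (FAnd p q))) r
| cf_impR d p q : cf (BSemi d (BForm p)) q -> cf d (FImp p q)
| cf_impL c d1 d2 p q r : cf d1 p -> cf (fill c (BSemi d2 (BForm q))) r ->
    cf (fill c (BSemi (BSemi d1 d2) (BForm (FImp p q)))) r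
| cf_botL c p : cf (fill c (BForm FBot)) p
| cf_orR1 d p q : cf d p -> cf d (FOr p q)
| cf_orR2 d p q : cf d q -> cf d (FOr p q)
| cf_orL c p q r : cf (fill c (BForm p)) r -> cf (fill c (BForm q)) r ->
    cf (fill c (BForm (FOr p q))) r.

Definition bset := bunch -> Prop.

Definition principal (p : formula) : bset := fun d => cf d p.

Definition cl (X : bset) : bset :=
  fun d => forall p : formula,
    (forall g, X g -> principal p g) -> principal p d.

Definition closedC (X : bset) : Prop := forall d, X d <-> cl X d.

(* Main.v *)
Require Import Defs.

Inductive U : bunch -> bunch -> Prop :=
| U_refl d : U d d
| U_star p q : U (BForm (FStar p q)) (BComma (BForm p) (BForm q))
| U_and p q : U (BForm (FAnd p q)) (BSemi (BForm p) (BForm q))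
| U_emp : U (BForm FEmp) BEmpM
| U_top : U (BForm FTop) BEmpA
| U_comma a b a' b' : U a a' -> U b b' -> U (BComma a b) (BComma a' b')
| U_semi a b a' b' : U a a' -> U b b' -> U (BSemi a b) (BSemi a' b').

Lemma U_comma_inv a b x : U (BComma a b) x ->
  exists a' b', x = BComma a' b' /\ U a a' /\ U b b'.
Proof. intro H; inversion H; subst; eauto 10 using U_refl. Qed.

Lemma U_semi_inv a b x : U (BSemi a b) x ->
  exists a' b', x = BSemi a' b' /\ U a a' /\ U b b'.
Proof. intro H; inversion H; subst; eauto 10 using U_refl. Qed.

Lemma U_empm_inv x : U BEmpM x -> x = BEmpM.
Proof. intro H; inversion H; auto. Qed.
Lemma U_empa_inv x : U BEmpA x -> x = BEmpA.
Proof. intro H; inversion H; auto. Qed.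

Lemma U_fill c a b : U a b -> U (fill c a) (fill c b).
Proof. induction c; simpl; intros; auto using U, U_refl. Qed.

Lemma U_fill_inv c d x : U (fill c d) x ->
  exists c' y, x = fill c' y /\ U d y /\ (forall a b, U a b -> U (fill c a) (fill c' b)).
Proof.
  revert x; induction c; simpl; intros x H.
  - exists Hole, x; simpl; auto.
  - apply U_comma_inv in H as (a' & b' & -> & H1 & H2).
    destruct (IHc _ H1) as (c' & y & -> & Hy & Hc).
    exists (CCommaL c' b'), y; simpl; split; auto; split; auto.
    intros; constructor; auto.
  - apply U_comma_inv in H as (a' & b' & -> & H1 & H2).
    destruct (IHc _ H2) as (c' & y & -> & Hy & Hc).
    exists (CCommaR a' c'), y; simpl; split; auto; split; auto.
    intros; constructor; auto.
  - apply U_semi_inv in H as (a' & b' & -> & H1 & H2).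
    destruct (IHc _ H1) as (c' & y & -> & Hy & Hc).
    exists (CSemiL c' b'), y; simpl; split; auto; split; auto.
    intros; constructor; auto.
  - apply U_semi_inv in H as (a' & b' & -> & H1 & H2).
    destruct (IHc _ H2) as (c' & y & -> & Hy & Hc).
    exists (CSemiR a' c'), y; simpl; split; auto; split; auto.
    intros; constructor; auto.
Qed.

Lemma beq_U d e : beq d e ->
  (forall d1, U d d1 -> exists e1, U e e1 /\ beq d1 e1) /\
  (forall e1, U e e1 -> exists d1, U d d1 /\ beq d1 e1).
Proof.
  induction 1.
  - split; intros; eexists; split; eauto using beq.
  - destruct IHbeq as [A B]; split; intros z Hz.
    + destruct (B z Hz) as (w & ? & ?); eauto using beq.
    + destruct (A z Hz) as (w & ? & ?); eauto using beq.
  - destruct IHbeq1 as [A1 B1], IHbeq2 as [A2 B2]; split; intros z Hz.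
    + destruct (A1 z Hz) as (w & ? & ?). destruct (A2 w) as (v & ? & ?); eauto using beq.
    + destruct (B2 z Hz) as (w & ? & ?). destruct (B1 w) as (v & ? & ?); eauto using beq.
  - split; intros z Hz; apply U_comma_inv in Hz as (a & b & -> & ? & ?);
      (eexists; split; [ apply U_comma; eassumption | apply beq_comma_comm ]).
  - split; intros z Hz.
    + apply U_comma_inv in Hz as (a & b & -> & ? & Hb).
      apply U_comma_inv in Hb as (b1 & b2 & -> & ? & ?).
      exists (BComma (BComma a b1) b2); split; [repeat constructor; auto | apply beq_comma_assoc].
    + apply U_comma_inv in Hz as (a & b & -> & Ha & ?).
      apply U_comma_inv in Ha as (a1 & a2 & -> & ? & ?).
      exists (BComma a1 (BComma a2 b)); split; [repeat constructor; auto | apply beq_comma_assoc].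
  - split; intros z Hz.
    + apply U_comma_inv in Hz as (a & b & -> & ? & Hb). apply U_empm_inv in Hb; subst.
      exists a; split; [assumption | first [apply beq_comma_unit | apply beq_semi_unit]].
    + exists (BComma z BEmpM); split; [constructor; auto using U_refl | apply beq_comma_unit].
  - split; intros z Hz; apply U_semi_inv in Hz as (a & b & -> & ? & ?);
      (eexists; split; [ apply U_semi; eassumption | apply beq_semi_comm ]).
  - split; intros z Hz.
    + apply U_semi_inv in Hz as (a & b & -> & ? & Hb).
      apply U_semi_inv in Hb as (b1 & b2 & -> & ? & ?).
      exists (BSemi (BSemi a b1) b2); split; [repeat constructor; auto | apply beq_semi_assoc].
    + apply U_semi_inv in Hz as (a & b & -> & Ha & ?).
      apply U_semi_inv in Ha as (a1 & a2 & -> & ? & ?).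
      exists (BSemi a1 (BSemi a2 b)); split; [repeat constructor; auto | apply beq_semi_assoc].
  - split; intros z Hz.
    + apply U_semi_inv in Hz as (a & b & -> & ? & Hb). apply U_empa_inv in Hb; subst.
      exists a; split; [assumption | first [apply beq_comma_unit | apply beq_semi_unit]].
    + exists (BSemi z BEmpA); split; [constructor; auto using U_refl | apply beq_semi_unit].
  - destruct IHbeq as [A B]; split; intros z Hz.
    + apply U_fill_inv in Hz as (c' & y & -> & Hy & Hc).
      destruct (A y Hy) as (w & ? & ?). exists (fill c' w); split; [apply Hc; assumption | apply beq_ctx; assumption].
    + apply U_fill_inv in Hz as (c' & y & -> & Hy & Hc).
      destruct (B y Hy) as (w & ? & ?). exists (fill c' w); split; [apply Hc; assumption | apply beq_ctx; assumption].
Qed.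

Lemma cf_U d p : cf d p -> forall x, U d x -> cf x p.
Proof.
  induction 1; intros x HU.
  - inversion HU; subst; constructor.
  - destruct (proj1 (beq_U _ _ H0) x HU) as (w & Hw1 & Hw2). eapply cf_equiv; [apply IHcf; exact Hw1 | exact Hw2].
  - apply U_fill_inv in HU as (c' & y & -> & Hy & Hc).
    apply U_semi_inv in Hy as (y1 & y2 & -> & ? & ?). apply cf_weak; auto.
  - apply U_fill_inv in HU as (c' & y & -> & Hy & Hc).
    apply cf_contr; apply IHcf; apply Hc; constructor; auto.
  - apply U_empm_inv in HU; subst; constructor.
  - apply U_fill_inv in HU as (c' & y & -> & Hy & Hc).
    inversion Hy; subst.
    + apply cf_empL; apply IHcf; apply Hc; constructor.
    + apply IHcf; apply Hc; constructor.
  - apply U_comma_inv in HU as (a & b & -> & ? & ?). constructor; auto.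
  - apply U_fill_inv in HU as (c' & y & -> & Hy & Hc).
    inversion Hy; subst.
    + apply cf_starL; apply IHcf; apply Hc; constructor.
    + apply IHcf; apply Hc; constructor.
  - apply cf_wandR; apply IHcf; constructor; auto using U_refl.
  - apply U_fill_inv in HU as (c' & y & -> & Hy & Hc).
    apply U_comma_inv in Hy as (a & b & -> & Ha & Hb).
    inversion Hb; subst.
    apply U_comma_inv in Ha as (a1 & a2 & -> & ? & ?).
    apply cf_wandL; auto. apply IHcf2; apply Hc; constructor; auto using U_refl.
  - apply U_empa_inv in HU; subst; constructor.
  - apply U_fill_inv in HU as (c' & y & -> & Hy & Hc).
    inversion Hy; subst.
    + apply cf_topL; apply IHcf; apply Hc; constructor.
    + apply IHcf; apply Hc; constructor.
  - apply U_semi_inv in HU as (a & b & -> & ? & ?). constructor; auto.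
  - apply U_fill_inv in HU as (c' & y & -> & Hy & Hc).
    inversion Hy; subst.
    + apply cf_andL; apply IHcf; apply Hc; constructor.
    + apply IHcf; apply Hc; constructor.
  - apply cf_impR; apply IHcf; constructor; auto using U_refl.
  - apply U_fill_inv in HU as (c' & y & -> & Hy & Hc).
    apply U_semi_inv in Hy as (a & b & -> & Ha & Hb).
    inversion Hb; subst.
    apply U_semi_inv in Ha as (a1 & a2 & -> & ? & ?).
    apply cf_impL; auto. apply IHcf2; apply Hc; constructor; auto using U_refl.
  - apply U_fill_inv in HU as (c' & y & -> & Hy & Hc).
    inversion Hy; subst. apply cf_botL.
  - apply cf_orR1; auto.
  - apply cf_orR2; auto.
  - apply U_fill_inv in HU as (c' & y & -> & Hy & Hc).
    inversion Hy; subst.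
    apply cf_orL; [apply IHcf1 | apply IHcf2]; apply Hc; constructor.
Qed.

Fixpoint comp (c c' : bctx) : bctx :=
  match c with
  | Hole => c'
  | CCommaL c d => CCommaL (comp c c') d
  | CCommaR d c => CCommaR d (comp c c')
  | CSemiL c d => CSemiL (comp c c') d
  | CSemiR d c => CSemiR d (comp c c')
  end.

Lemma fill_comp c c' g : fill (comp c c') g = fill c (fill c' g).
Proof. induction c; simpl; congruence. Qed.

Lemma floor_fwd d : forall c p, cf (fill c d) p -> cf (fill c (BForm (floor d))) p.
Proof.
  induction d; simpl; intros c p0 H.
  - exact H.
  - apply cf_empL; auto.
  - apply cf_topL; auto.
  - apply cf_starL.
    pose proof (IHd1 (comp c (CCommaL Hole d2)) p0) as H1.
    rewrite !fill_comp in H1; simpl in H1.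
    pose proof (IHd2 (comp c (CCommaR (BForm (floor d1)) Hole)) p0) as H2.
    rewrite !fill_comp in H2; simpl in H2. auto.
  - apply cf_andL.
    pose proof (IHd1 (comp c (CSemiL Hole d2)) p0) as H1.
    rewrite !fill_comp in H1; simpl in H1.
    pose proof (IHd2 (comp c (CSemiR (BForm (floor d1)) Hole)) p0) as H2.
    rewrite !fill_comp in H2; simpl in H2. auto.
Qed.

Lemma floor_bwd d : forall c p, cf (fill c (BForm (floor d))) p -> cf (fill c d) p.
Proof.
  induction d; simpl; intros c p0 H.
  - exact H.
  - eapply cf_U; [exact H | apply U_fill; constructor].
  - eapply cf_U; [exact H | apply U_fill; constructor].
  - assert (H0 : cf (fill c (BComma (BForm (floor d1)) (BForm (floor d2)))) p0)
      by (eapply cf_U; [exact H | apply U_fill; constructor]).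
    pose proof (IHd1 (comp c (CCommaL Hole (BForm (floor d2)))) p0) as H1.
    rewrite !fill_comp in H1; simpl in H1.
    pose proof (IHd2 (comp c (CCommaR d1 Hole)) p0) as H2.
    rewrite !fill_comp in H2; simpl in H2. auto.
  - assert (H0 : cf (fill c (BSemi (BForm (floor d1)) (BForm (floor d2)))) p0)
      by (eapply cf_U; [exact H | apply U_fill; constructor]).
    pose proof (IHd1 (comp c (CSemiL Hole (BForm (floor d2)))) p0) as H1.
    rewrite !fill_comp in H1; simpl in H1.
    pose proof (IHd2 (comp c (CSemiR d1 Hole)) p0) as H2.
    rewrite !fill_comp in H2; simpl in H2. auto.
Qed.

Theorem proposition6p2 (X : bset) (HX : closedC X) :
  X (BForm FBot) /\
  (forall d d' : bunch, X d -> X (BSemi d d')) /\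
  (forall d : bunch, X (BSemi d d) -> X d) /\
  (forall d : bunch, X d <-> X (BForm (floor d))).
Proof.
  split; [| split; [| split]].
  - apply HX; intros p _. exact (cf_botL Hole p).
  - intros d d' Hd; apply HX; intros p Hp.
    exact (cf_weak Hole d d' p (Hp d Hd)).
  - intros d Hd; apply HX; intros p Hp.
    exact (cf_contr Hole d p (Hp _ Hd)).
  - intro d; split; intro Hd; apply HX; intros p Hp.
    + exact (floor_fwd d Hole p (Hp _ Hd)).
    + exact (floor_bwd d Hole p (Hp _ Hd)).
Qed.
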